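(* Let $k$ be a commutative ring, $A$ an associative $k$-algebra and $Q=\sum_ix_i\otimes y_i\in C_{A\otimes_kA}(A)$. Define $\mathrm{R}=Q\tau\in\operatorname{End}_k(A\otimes_kA)$, i.e. $\mathrm{R}(a\otimes b)=Q\cdot(b\otimes a)=\sum_i x_ib\otimes y_ia$, where $\tau$ is the twist map. Then $\mathrm{R}$ is a solution of the quantum Yang–Baxter equation $$\mathrm{R}^{12}\circ\mathrm{R}^{13}\circ\mathrm{R}^{23}=\mathrm{R}^{23}\circ\mathrm{R}^{13}\circ\mathrm{R}^{12}.$$
   Context: $C_{A\otimes_kA}(A)=\{\sum_i x_i\otimes y_i\in A\otimes_kA:\ \sum_i ax_i\otimes y_i=\sum_i x_i\otimes y_ia\ \text{for all }a\in A\}$. For $\mathrm{R}\in\operatorname{End}_k(A\otimes_kA)$: $\mathrm{R}^{12}=\mathrm{R}\otimes\operatorname{Id}$, $\mathrm{R}^{23}=\operatorname{Id}\otimes\mathrm{R}$, $\mathrm{R}^{13}=(\operatorname{Id}\otimes\tau)(\mathrm{R}\otimes\operatorname{Id})(\operatorname{Id}\otimes\tau)$ in $\operatorname{End}_k(A\otimes_kA\otimes_kA)$, where $\tau(a\otimes b)=b\otimes a$. *)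

(* Defs.v *)
From HB Require Import structures.
From mathcomp Require Import all_boot all_order all_algebra.
Set Implicit Arguments. Unset Strict Implicit. Unset Printing Implicit Defensive.
Import GRing.Theory.
Local Open Scope ring_scope.

Definition klinear (k : pzRingType) (U V : lmodType k) (g : U -> V) : Prop :=
  forall (c : k) (u v : U), g (c *: u + v) = c *: g u + g v.

(* The bilinear map t : A x A -> T exhibits T as the tensor product A (x)_k A
   (universal property: every k-bilinear map factors uniquely through t). *)
Definition is_tensor2 (k : comPzRingType) (A T : lmodType k) (t : A -> A -> T) : Prop :=
  (forall b, klinear (fun a => t a b)) /\ (forall a, klinear (t a)) /\
  forall (M : lmodType k) (f : A -> A -> M),
    (forall b, klinear (fun a => f a b)) -> (forall a, klinear (f a)) ->
    (exists g : T -> M, klinear g /\ forall a b, g (t a b) = f a b) /\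
    (forall g1 g2 : T -> M, klinear g1 -> klinear g2 ->
        (forall a b, g1 (t a b) = g2 (t a b)) -> forall x, g1 x = g2 x).

Definition is_tensor3 (k : comPzRingType) (A T : lmodType k) (t : A -> A -> A -> T) : Prop :=
  (forall b c, klinear (fun a => t a b c)) /\ (forall a c, klinear (fun b => t a b c)) /\
  (forall a b, klinear (t a b)) /\
  forall (M : lmodType k) (f : A -> A -> A -> M),
    (forall b c, klinear (fun a => f a b c)) -> (forall a c, klinear (fun b => f a b c)) ->
    (forall a b, klinear (f a b)) ->
    (exists g : T -> M, klinear g /\ forall a b c, g (t a b c) = f a b c) /\
    (forall g1 g2 : T -> M, klinear g1 -> klinear g2 ->
        (forall a b c, g1 (t a b c) = g2 (t a b c)) -> forall x, g1 x = g2 x).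

(* Main.v *)
Require Import Defs.
From HB Require Import structures.
From mathcomp Require Import all_boot all_order all_algebra.
Import GRing.Theory.
Local Open Scope ring_scope.

Lemma klin0 (k : pzRingType) (U V : lmodType k) (g : U -> V) : klinear g -> g 0 = 0.
Proof.
move=> H; have E := H 1 0 0; rewrite !scale1r addr0 in E.
by apply: (addrI (g 0)); rewrite addr0 -E.
Qed.

Lemma klinD (k : pzRingType) (U V : lmodType k) (g : U -> V) : klinear g ->
  forall u v, g (u + v) = g u + g v.
Proof. by move=> H u v; rewrite -[u in LHS]scale1r H scale1r. Qed.

Lemma klin_sum (k : pzRingType) (U V : lmodType k) (g : U -> V) n (F : 'I_n -> U) :
  klinear g -> g (\sum_(i < n) F i) = \sum_(i < n) g (F i).
Proof.
move=> H; apply: (big_morph g); [exact: klinD | exact: klin0].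
Qed.

Lemma klin_comp (k : pzRingType) (U V W : lmodType k) (g : U -> V) (h : V -> W) :
  klinear g -> klinear h -> klinear (fun u => h (g u)).
Proof. by move=> Hg Hh c u v; rewrite Hg Hh. Qed.

Theorem corollary25 (k : comPzRingType) (A : algType k)
  (T2 : lmodType k) (t2 : A -> A -> T2) (HT2 : is_tensor2 t2)
  (T3 : lmodType k) (t3 : A -> A -> A -> T3) (HT3 : is_tensor3 t3)
  (n : nat) (x y : 'I_n -> A)
  (HQ : forall a : A, \sum_(i < n) t2 (a * x i) (y i) = \sum_(i < n) t2 (x i) (y i * a))
  (R : T2 -> T2) (HRlin : klinear R)
  (HR : forall a b, R (t2 a b) = \sum_(i < n) t2 (x i * b) (y i * a))
  (R12 R13 R23 : T3 -> T3)
  (H12lin : klinear R12) (H13lin : klinear R13) (H23lin : klinear R23)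
  (H12 : forall a b c, R12 (t3 a b c) = \sum_(i < n) t3 (x i * b) (y i * a) c)
  (H13 : forall a b c, R13 (t3 a b c) = \sum_(i < n) t3 (x i * c) b (y i * a))
  (H23 : forall a b c, R23 (t3 a b c) = \sum_(i < n) t3 a (x i * c) (y i * b)) :
  forall u : T3, R12 (R13 (R23 u)) = R23 (R13 (R12 u)).
Proof.
have [L1 [L2 [L3 U3]]] := HT3.
have [B1 [B2 U2]] := HT2.
have key : forall F : A -> A -> T3, (forall b, klinear (fun a => F a b)) ->
    (forall a, klinear (F a)) ->
    forall a, \sum_(i < n) F (a * x i) (y i) = \sum_(i < n) F (x i) (y i * a).
  move=> F F1 F2 a.
  have [[g [gl gE]] _] := U2 T3 F F1 F2.
  under eq_bigr do rewrite -gE.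
  under [RHS]eq_bigr do rewrite -gE.
  by rewrite -!klin_sum // HQ.
move=> u.
have [_ uniq] := U3 T3 t3 L1 L2 L3.
apply: (uniq (fun u => R12 (R13 (R23 u))) (fun u => R23 (R13 (R12 u)))).
- by apply: klin_comp => //; apply: klin_comp.
- by apply: klin_comp => //; apply: klin_comp.
move=> a b c.
rewrite H23 klin_sum // klin_sum //.
under eq_bigr do rewrite H13 klin_sum //.
under eq_bigr do under eq_bigr do rewrite H12.
rewrite H12 klin_sum // klin_sum //.
under [RHS]eq_bigr do rewrite H13 klin_sum //.
under [RHS]eq_bigr do under eq_bigr do rewrite H23.
rewrite /=.
under eq_bigr do under eq_bigr do under eq_bigr do rewrite !mulrA.
under [RHS]eq_bigr do under eq_bigr do under eq_bigr do rewrite !mulrA.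
(* LHS: sum_i sum_j sum_l t3 (x l * x i * c) (y l * x j * y i * b) (y j * a) *)
under eq_bigr do rewrite exchange_big /=.
transitivity (\sum_(i < n) \sum_(l < n) \sum_(j < n)
   t3 (x l * x i * c) (x j * y i * b) (y j * y l * a)).
  apply: eq_bigr => i _; apply: eq_bigr => l _.
  rewrite (key (fun p q => t3 (x l * x i * c) (p * y i * b) (q * a))) //.
  - move=> q r p s; rewrite mulrDl mulrDl -scalerAl -scalerAl.
    exact: (L2 (x l * x i * c) (q * a)).
  - move=> p r q s; rewrite mulrDl -scalerAl.
    exact: (L3 (x l * x i * c) (p * y i * b)).
rewrite exchange_big /=.
under eq_bigr do rewrite exchange_big /=.
transitivity (\sum_(l < n) \sum_(j < n) \sum_(i < n)
   t3 (x i * c) (x j * (y i * x l) * b) (y j * y l * a)).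
  apply: eq_bigr => l _; apply: eq_bigr => j _.
  rewrite (key (fun p q => t3 (p * c) (x j * q * b) (y j * y l * a))) //.
  - move=> q r p s; rewrite mulrDl -scalerAl.
    exact: (L1 (x j * q * b) (y j * y l * a)).
  - move=> p r q s; rewrite mulrDr mulrDl -scalerAr -scalerAl.
    exact: (L2 (p * c) (y j * y l * a)).
apply: eq_bigr => l _; rewrite exchange_big /=.
apply: eq_bigr => i _; apply: eq_bigr => j _.
by rewrite !mulrA.
Qed.
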